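(* Let $G$ be a linear group (a subgroup of $GL_n(K)$ for some field $K$ and some $n$). Then the commutator subgroup $F'$ of $F$ is a set of weak identities in $G$.
   Context: Let $F$ be the free group on countably many generators $g_1,g_2,\dots$, and $F'=[F,F]$ its commutator subgroup. For $N\ge 1$, $F^{\times N}$ denotes the direct product of $N$ copies of $F$ and $i_k: F\to F^{\times N}$ the inclusion as the $k$-th factor. A subset $S\subset F$ is a set of weak identities in a group $G$ if there exists an integer $N\ge1$ such that for any elements $s_1,\dots,s_N\in S$ and any homomorphism $\rho: F^{\times N}\to G$ there is an index $k\in\{1,\dots,N\}$ with $\rho(i_k(s_k))=1$. *)

(* Defs.v *)
From HB Require Import structures.
From mathcomp Require Import all_boot all_order all_algebra.
Set Implicit Arguments. Unset Strict Implicit. Unset Printing Implicit Defensive.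
Import GRing.Theory.
Local Open Scope ring_scope.

(* A letter (i, false) stands for g_i, (i, true) for g_i^-1. *)
Definition letter := (nat * bool)%type.
Definition cancels (x y : letter) : bool := (x.1 == y.1) && (x.2 != y.2).

(* Free reduction via a stack. *)
Definition push (x : letter) (w : seq letter) : seq letter :=
  match w with
  | y :: w' => if cancels x y then w' else x :: w
  | [::] => [:: x]
  end.
Definition reduce (w : seq letter) : seq letter := foldr push [::] w.
Definition reduced (w : seq letter) : bool := reduce w == w.

Definition FG := {w : seq letter | reduced w}.
Definition fone : FG := exist _ [::] (eqxx _).
Definition fmul (a b : FG) : FG := insubd fone (reduce (val a ++ val b)).
Definition finv (a : FG) : FG :=
  insubd fone (reduce (rev (map (fun x : letter => (x.1, ~~ x.2)) (val a)))).
Definition fgen (i : nat) : FG := insubd fone [:: (i, false)].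
Definition fcomm (a b : FG) : FG := fmul (fmul (finv a) (finv b)) (fmul a b).

Inductive in_derived : FG -> Prop :=
  | der_comm a b : in_derived (fcomm a b)
  | der_one : in_derived fone
  | der_mul a b : in_derived a -> in_derived b -> in_derived (fmul a b)
  | der_inv a : in_derived a -> in_derived (finv a).

Definition FN (N : nat) := {ffun 'I_N -> FG}.
Definition FNmul N (x y : FN N) : FN N := [ffun i => fmul (x i) (y i)].
Definition incl N (k : 'I_N) (s : FG) : FN N :=
  [ffun j => if j == k then s else fone].

Definition is_linear_group (K : fieldType) (n : nat) (G : 'M[K]_n -> Prop) :=
  [/\ forall A, G A -> A \in unitmx,
      G 1%:M,
      forall A B, G A -> G B -> G (A *m B)
    & forall A, G A -> G (invmx A)].

Definition is_hom_into (K : fieldType) (n N : nat) (G : 'M[K]_n -> Prop)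
    (rho : FN N -> 'M[K]_n) :=
  (forall x, G (rho x)) /\ (forall x y, rho (FNmul x y) = rho x *m rho y).

Definition weak_identities (K : fieldType) (n : nat) (G : 'M[K]_n -> Prop)
    (S : FG -> Prop) :=
  exists N : nat, (1 <= N)%N /\
    forall s : 'I_N -> FG, (forall k, S (s k)) ->
    forall rho : FN N -> 'M[K]_n, is_hom_into G rho ->
    exists k : 'I_N, rho (incl k (s k)) = 1%:M.

(* Main.v *)
Require Import Defs.
From mathcomp Require Import all_boot all_order all_algebra.
From Stdlib Require Import Classical.
Set Implicit Arguments. Unset Strict Implicit. Unset Printing Implicit Defensive.

Definition nc (x y : letter) : bool := ~~ cancels x y.
Definition act (u w : seq letter) := foldr push w u.

Lemma push_sorted x w : sorted nc w -> sorted nc (push x w).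
Proof.
case: w => [|y w] //= Hw.
case: ifP => Hc; first exact: path_sorted Hw.
by rewrite /= /nc Hc.
Qed.

Lemma act_sorted u w : sorted nc w -> sorted nc (act u w).
Proof. by elim: u => [|x u IH] //= Hw; apply: push_sorted; apply: IH. Qed.

Lemma reduce_sorted w : sorted nc (reduce w).
Proof. exact: (@act_sorted w [::]). Qed.

Lemma cancels_trans x y z : cancels x y -> cancels y z -> x = z.
Proof.
case: x => [x1 x2]; case: y => [y1 y2]; case: z => [z1 z2].
rewrite /cancels /= => /andP[/eqP -> H1] /andP[/eqP -> H2].
by case: x2 y2 z2 H1 H2 => [] [] [].
Qed.

Lemma push_push x y z : cancels x y -> sorted nc z -> push x (push y z) = z.
Proof.
move=> Hxy; case: z => [|y' z] /=; first by rewrite Hxy.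
case: ifP => Hyy' Hs; last by rewrite /= Hxy.
have E := cancels_trans Hxy Hyy'; subst y'.
case: z Hs => [|y'' z] //= /andP[Hn _].
by move: Hn; rewrite /nc => /negbTE ->.
Qed.

Lemma act_push x s w : sorted nc w -> act (push x s) w = push x (act s w).
Proof.
move=> Hw; case: s => [|y s] //=.
case: ifP => Hc //=.
by rewrite push_push //; apply: act_sorted.
Qed.

Lemma act_reduce u w : sorted nc w -> act (reduce u) w = act u w.
Proof.
move=> Hw; elim: u => [|x u IH] //=.
by rewrite act_push // IH.
Qed.

Lemma reduceK w : reduce (reduce w) = reduce w.
Proof. exact: (@act_reduce w [::]). Qed.

Lemma reduce_cat u v : reduce (u ++ v) = act u (reduce v).
Proof. by rewrite /reduce /act foldr_cat. Qed.

Lemma reduced_reduce w : reduced (reduce w).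
Proof. by rewrite /reduced reduceK. Qed.

Lemma valFG (a : FG) : reduce (val a) = val a.
Proof. by apply/eqP; case: a. Qed.

Lemma sortedFG (a : FG) : sorted nc (val a).
Proof. by rewrite -valFG; apply: reduce_sorted. Qed.

Lemma fmulE a b : val (fmul a b) = reduce (val a ++ val b).
Proof. by rewrite /fmul val_insubd reduced_reduce. Qed.

Lemma finvE a : val (Defs.finv a) =
  reduce (rev (map (fun x : letter => (x.1, ~~ x.2)) (val a))).
Proof. by rewrite /finv val_insubd reduced_reduce. Qed.

Lemma act_inv a w :
  act (rev (map (fun x : letter => (x.1, ~~ x.2)) a)) (a ++ w) = w.
Proof.
elim: a => [|x a IH] //=.
rewrite rev_cons -cats1 /act foldr_cat /= /cancels /= eqxx.
by case: (x.2) => /=; exact: IH.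
Qed.

Lemma fmulVf a : fmul (Defs.finv a) a = fone.
Proof.
apply: val_inj; rewrite fmulE finvE reduce_cat valFG act_reduce ?sortedFG //.
by rewrite -[X in act _ X]cats0 act_inv.
Qed.

Lemma fmul1f a : fmul fone a = a.
Proof. by apply: val_inj; rewrite fmulE /= valFG. Qed.

Lemma fmulf1 a : fmul a fone = a.
Proof. by apply: val_inj; rewrite fmulE /= cats0 valFG. Qed.

Import GRing.Theory.
Local Open Scope ring_scope.

Lemma abel_der (K : fieldType) n (f : FG -> 'M[K]_n) :
  (forall a b, f (fmul a b) = f a *m f b) -> f fone = 1%:M ->
  (forall a b, f a *m f b = f b *m f a) ->
  forall s, in_derived s -> f s = 1%:M.
Proof.
move=> Hm H1 Hc.
have HV a : f (Defs.finv a) *m f a = 1%:M by rewrite -Hm fmulVf.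
move=> s; elim=> {s} [a b| |a b _ Ha _ Hb|a _ Ha].
- rewrite /fcomm !Hm.
  rewrite -!mulmxA [f (Defs.finv b) *m _]mulmxA (Hc (Defs.finv b) a).
  by rewrite -!mulmxA (HV b) mulmx1 (HV a).
- exact: H1.
- by rewrite Hm Ha Hb mul1mx.
- by rewrite -[f _]mulmx1 -Ha HV.
Qed.

Definition Comm (K : fieldType) n N (rho : FN N -> 'M[K]_n) (k : nat) (X : 'M[K]_n) :=
  forall (j : 'I_N), (k <= j)%N -> forall b, X *m rho (incl j b) = rho (incl j b) *m X.

Definition supp N (k : nat) (x : FN N) := forall j : 'I_N, (k <= j)%N -> x j = fone.

Lemma comm_supp (K : fieldType) n N (rho : FN N -> 'M[K]_n) k x :
  (forall x y, rho (FNmul x y) = rho x *m rho y) ->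
  supp k x -> Comm rho k (rho x).
Proof.
move=> Hm Hs j Hj b; rewrite -!Hm; congr rho; apply/ffunP => i; rewrite !ffunE.
case: eqP => [->|_]; first by rewrite (Hs j Hj) fmul1f fmulf1.
by rewrite fmul1f fmulf1.
Qed.

Lemma vec_mxZ (K : fieldType) n (c : K) (w : 'rV[K]_(n * n)) :
  vec_mx (c *: w) = c *: (vec_mx w : 'M_n).
Proof. by apply/matrixP => i j; rewrite !mxE. Qed.

Lemma vec_mxD (K : fieldType) n (v w : 'rV[K]_(n * n)) :
  vec_mx (v + w) = (vec_mx v : 'M_n) + vec_mx w.
Proof. by apply/matrixP => i j; rewrite !mxE. Qed.

Lemma stages (K : fieldType) n N (rho : FN N -> 'M[K]_n) :
  (forall x y, rho (FNmul x y) = rho x *m rho y) ->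
  (forall k : 'I_N, ~ (forall a b, rho (incl k a) *m rho (incl k b) = rho (incl k b) *m rho (incl k a))) ->
  forall k, (k <= N)%N -> exists m (M : 'M[K]_(m, n * n)),
     \rank M = k /\ forall v, (v <= M)%MS -> Comm rho k (vec_mx v).
Proof.
move=> Hm Hna; elim=> [_|k IH HkN].
  exists (n * n)%N, 0; split; first by rewrite mxrank0.
  move=> v; rewrite submx0 => /eqP -> j _ b.
  by rewrite linear0 mul0mx mulmx0.
have [m [M [HrM HcM]]] := IH (ltnW HkN).
case: (classic (exists x, supp k.+1 x /\ ~~ (mxvec (rho x) <= M)%MS)).
  move=> [x [Hsx HxM]].
  exists (m + 1)%N, (col_mx M (mxvec (rho x))); split.
    have Hlt : (M < col_mx M (mxvec (rho x)))%MS.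
      rewrite ltmxE col_mx_sub submx_refl /= (negbTE HxM) andbT.
      by rewrite -addsmxE addsmxSl.
    have := rank_ltmx Hlt; rewrite HrM => H1.
    have := leq_of_leqif (mxrank_adds_leqif M (mxvec (rho x))).
    rewrite addsmxE HrM => H2.
    have H3 := rank_leq_row (mxvec (rho x)).
    apply/eqP; rewrite eqn_leq H1 andbT; apply: (leq_trans H2).
    by rewrite -(addn1 k) leq_add2l.
  move=> v; rewrite -addsmxE => /sub_addsmxP [u ->].
  rewrite vec_mxD [u.2]mx11_scalar mul_scalar_mx vec_mxZ mxvecK.
  have Hc1 := HcM _ (submxMl u.1 M).
  have Hc2 := comm_supp Hm Hsx.
  move=> j Hj b.
  by rewrite mulmxDl mulmxDr -scalemxAl -scalemxAr (Hc1 j (ltnW Hj)) (Hc2 j Hj) scalemxAl.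
move=> Hno; exfalso.
apply: (Hna (Ordinal HkN)) => a b.
have Hx : (mxvec (rho (incl (Ordinal HkN) a)) <= M)%MS.
  apply/negPn/negP => Hn; apply: Hno; exists (incl (Ordinal HkN) a); split => //.
  move=> j Hj; rewrite ffunE; case: eqP => // E.
  by move: Hj; rewrite E /= ltnn.
have := HcM _ Hx; rewrite mxvecK => Hc.
by apply: Hc.
Qed.

Theorem theorem3p4 (K : fieldType) (n : nat) (G : 'M[K]_n -> Prop) :
  is_linear_group G -> weak_identities G in_derived.
Proof.
move=> [HGu HG1 HGm HGi].
exists (n * n).+1; split => // s Hs rho [HrG Hrm].
case: (classic (exists k, rho (incl k (s k)) = 1%:M)) => // Hno.
exfalso.
have Hu x : rho x \in unitmx by apply: HGu.
set e : FN (n * n).+1 := [ffun => fone].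
have He : rho e = 1%:M.
  have E : rho e = rho e *m rho e by rewrite -Hrm; congr rho; apply/ffunP => i; rewrite !ffunE fmul1f.
  by rewrite -(mulVmx (Hu e)) {3}E mulKmx.
have Hna : forall k : 'I_(n * n).+1, ~ (forall a b, rho (incl k a) *m rho (incl k b) = rho (incl k b) *m rho (incl k a)).
  move=> k Hab; apply: Hno; exists k.
  apply: (@abel_der K n (fun a => rho (incl k a))) => //.
  - move=> a b; rewrite -Hrm; congr rho; apply/ffunP => i; rewrite !ffunE.
    by case: eqP => // _; rewrite fmul1f.
  - by rewrite -He; congr rho; apply/ffunP => i; rewrite !ffunE; case: eqP.
have [m [M [HrM _]]] := stages Hrm Hna (leqnn _).
by have := rank_leq_col M; rewrite HrM ltnn.
Qed.
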